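(* With $P$, $\widehat P$, $R_m$, $\Gamma$, $\alpha_\sigma$, $\widehat\alpha_\sigma$ and $\Psi(P,\widehat P)$ as in the context, for every conditional plan $\sigma\in\Gamma$ and every $s\in S$, $$|\alpha_\sigma(s)-\widehat\alpha_\sigma(s)|\le \frac{2\gamma R_m}{(1-\gamma)^2}\,\Psi(P,\widehat P).$$
   Context: $P=\langle S,A,O,T,Z,R,b_0,\gamma\rangle$ is a POMDP with bounded $S\subset\mathbb R^n$, $A\subset\mathbb R^d$, $O\subset\mathbb R^l$, conditional densities $T(s,a,s')=p(s'\mid s,a)$, $Z(s',a,o)=p(o\mid s',a)$, bounded reward $R$, discount $\gamma\in(0,1)$; $\widehat P=\langle S,A,O,\widehat T,\widehat Z,R,b_0,\gamma\rangle$ differs only in transition and observation densities. $R_m=\max\{|\min_{s,a}R(s,a)|,\max_{s,a}R(s,a)\}$. $D_{TV}(\mu,\nu)=\sup_E|\mu(E)-\nu(E)|$. SNM: $\Psi(P,\widehat P)=\sup_{s,a}D_{TV}(T(s,a,\cdot),\widehat T(s,a,\cdot))+\sup_{s,a}D_{TV}(Z(s,a,\cdot),\widehat Z(s,a,\cdot))$. A conditional plan $\sigma=\langle a,\nu\rangle\in\Gamma$ consists of an action $a\in A$ and an observation strategy $\nu:O\to\Gamma$. Its $\alpha$-function is $\alpha_\sigma(s)=R(s,a)+\gamma\int_S\int_O T(s,a,s')Z(s',a,o)\alpha_{\nu(o)}(s')\,do\,ds'$, and $\widehat\alpha_\sigma$ is defined identically with $\widehat T,\widehat Z$. *)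

(* Defs.v *)
From HB Require Import structures.
From mathcomp Require Import all_boot all_order all_algebra.
From mathcomp Require Import all_classical all_reals all_analysis.
Set Implicit Arguments. Unset Strict Implicit. Unset Printing Implicit Defensive.
Import Order.TTheory GRing.Theory Num.Theory.
Local Open Scope classical_set_scope.
Local Open Scope ring_scope.

Section POMDPDefs.
Context {R : realType}.

Definition is_density {d} {X : measurableType d}
  (mu : {measure set X -> \bar R}) (p : X -> R) : Prop :=
  [/\ forall x, 0 <= p x, measurable_fun setT p
    & (\int[mu]_(x in setT) (p x)%:E = 1)%E].

Definition tv_dist {d} {X : measurableType d}
  (mu : {measure set X -> \bar R}) (p q : X -> R) : \bar R :=
  ereal_sup [set `| (\int[mu]_(x in E) (p x)%:E - \int[mu]_(x in E) (q x)%:E)%E |%E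
            | E in measurable].

(* The SNM Psi(P, Phat). T(s,a,s') = p(s'|s,a), Z(s',a,o) = p(o|s',a). *)
Definition snm {dS dO} {S : measurableType dS} {O : measurableType dO} {A : Type}
  (muS : {measure set S -> \bar R}) (muO : {measure set O -> \bar R})
  (T Th : S -> A -> S -> R) (Z Zh : S -> A -> O -> R) : \bar R :=
  (ereal_sup [set tv_dist muS (T p.1 p.2) (Th p.1 p.2) | p in [set: S * A]] +
   ereal_sup [set tv_dist muO (Z p.1 p.2) (Zh p.1 p.2) | p in [set: S * A]])%E.

(* R_m = max{ |min R|, max R } (min/max taken as inf/sup of the range). *)
Definition reward_max {S A : Type} (rew : S -> A -> R) : R :=
  Num.max `| inf [set rew p.1 p.2 | p in [set: S * A]] |
          (sup [set rew p.1 p.2 | p in [set: S * A]]).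

(* Conditional plans: Gamma with sigma = <act sigma, nxt sigma>, where
   nxt sigma : O -> Gamma is the observation strategy.  [alpha] is the
   alpha-function of the plans for the model (T, Z): the bounded
   (measurable) solution of
   alpha_sigma(s) = R(s,a) + gamma * int_S int_O T(s,a,s') Z(s',a,o)
                                      alpha_{nu(o)}(s') do ds'. *)
Definition is_alpha_fun {dS dO} {S : measurableType dS} {O : measurableType dO}
  {A : Type} (muS : {measure set S -> \bar R}) (muO : {measure set O -> \bar R})
  (T : S -> A -> S -> R) (Z : S -> A -> O -> R) (rew : S -> A -> R) (gamma : R)
  {Gamma : Type} (act : Gamma -> A) (nxt : Gamma -> O -> Gamma)
  (alpha : Gamma -> S -> R) : Prop :=
  [/\ forall sigma,
        measurable_fun setT (fun x : S * O => alpha (nxt sigma x.2) x.1),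
      exists M : R, forall sigma s, `|alpha sigma s| <= M
    & forall sigma s,
        ((alpha sigma s)%:E =
         (rew s (act sigma))%:E + gamma%:E *
           \int[muS]_(s' in setT) \int[muO]_(o in setT)
              (T s (act sigma) s' * Z s' (act sigma) o * alpha (nxt sigma o) s')%:E)%E].

End POMDPDefs.

(* Main.v *)
Require Import Defs.
From HB Require Import structures.
From mathcomp Require Import all_boot all_order all_algebra.
From mathcomp Require Import all_classical all_reals all_analysis.
From mathcomp Require Import measurable_realfun.
From mathcomp Require Import lra ring.
Import Order.TTheory GRing.Theory Num.Theory.
Local Open Scope classical_set_scope.
Local Open Scope ring_scope.
Set Implicit Arguments. Unset Strict Implicit. Unset Printing Implicit Defensive.

Section Gen.
Context {R : realType} {d} {X : measurableType d} (mu : {measure set X -> \bar R}).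

Lemma dens_int (p : X -> R) : is_density mu p -> mu.-integrable setT (EFin \o p).
Proof.
case=> p0 mp ip; apply/integrableP; split; first exact/measurable_EFinP.
rewrite (_ : (fun x => _) = (fun x => (p x)%:E)); last first.
  by apply/funext => x /=; rewrite ger0_norm.
by rewrite ip ltry.
Qed.

Lemma dens_mul_int (p f : X -> R) (K : R) : is_density mu p -> measurable_fun setT f ->
  (forall x, `|f x| <= K) -> mu.-integrable setT (EFin \o (fun x => p x * f x)).
Proof.
move=> hp mf fK; have [p0 mp ip] := hp.
apply: (@le_integrable _ _ _ mu setT measurableT _ (fun x => (K * p x)%:E)) => //.
- by apply/measurable_EFinP; exact: measurable_funM.
- move=> x _ /=; rewrite lee_fin normrM (ger0_norm (p0 x)).
  rewrite (le_trans _ (ler_norm _))// mulrC ler_wpM2r//.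
- rewrite (_ : (fun x => _) = (fun x => (K%:E * (EFin \o p) x)%E)); last first.
    by apply/funext => x /=; rewrite EFinM.
  exact/integrableZl/dens_int.
Qed.

Lemma Rint_dens (p : X -> R) : is_density mu p -> \int[mu]_x p x = 1.
Proof. by case=> _ _ ip; rewrite /Rintegral ip. Qed.

Lemma dens_bound (p f : X -> R) (K : R) : is_density mu p -> measurable_fun setT f ->
  (forall x, `|f x| <= K) -> `| \int[mu]_x (p x * f x) | <= K.
Proof.
move=> hp mf fK; have [p0 mp ip] := hp.
apply: (le_trans (le_normr_Rintegral _ _)) => //; first exact: dens_mul_int hp mf fK.
apply: (@le_trans _ _ (\int[mu]_x (K * p x))).
  apply: le_Rintegral => //.
  - apply: (@le_integrable _ _ _ mu setT measurableT _ (EFin \o (fun x => p x * f x))).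
    + apply/measurable_EFinP; apply: measurableT_comp => //; exact: measurable_funM.
    + by move=> x _ /=; rewrite normr_id.
    + exact: dens_mul_int hp mf fK.
  - rewrite (_ : _ \o _ = (fun x => (K%:E * (EFin \o p) x)%E)); last first.
      by apply/funext => x /=; rewrite EFinM.
    exact/integrableZl/dens_int.
  - by move=> x _; rewrite normrM ger0_norm // mulrC ler_wpM2r.
rewrite RintegralZl //; last exact: dens_int.
by rewrite Rint_dens // mulr1.
Qed.
End Gen.

Section TV.
Context {R : realType} {d} {X : measurableType d} (mu : {measure set X -> \bar R}).

Lemma dens_intS (p : X -> R) E : measurable E -> is_density mu p ->
  mu.-integrable E (EFin \o p).
Proof. by move=> mE hp; exact: (integrableS measurableT mE (@subsetT _ E) (dens_int hp)). Qed.

Lemma Rint_densE (p : X -> R) E : measurable E -> is_density mu p ->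
  (\int[mu]_(x in E) (p x)%:E)%E = (\int[mu]_(x in E) p x)%:E.
Proof.
move=> mE hp; rewrite /Rintegral fineK //.
exact: (integrable_fin_num mE (dens_intS mE hp)).
Qed.

Lemma Rint_dens01 (p : X -> R) E : measurable E -> is_density mu p ->
  0 <= \int[mu]_(x in E) p x <= 1.
Proof.
move=> mE hp; have [p0 mp ip] := hp.
rewrite -!lee_fin -Rint_densE //; apply/andP; split.
  by apply: integral_ge0 => x _; rewrite lee_fin.
rewrite -ip; apply: ge0_subset_integral => //.
- exact/measurable_EFinP.
- by move=> x _; rewrite lee_fin.
Qed.

Lemma tv_elem (p q : X -> R) E : measurable E -> is_density mu p -> is_density mu q ->
  ((`| \int[mu]_(x in E) p x - \int[mu]_(x in E) q x |)%:E <= tv_dist mu p q)%E.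
Proof.
move=> mE hp hq; apply: ereal_sup_ubound; exists E => //.
by rewrite !Rint_densE // -EFinB.
Qed.

Lemma tv_01 (p q : X -> R) : is_density mu p -> is_density mu q ->
  (0 <= tv_dist mu p q <= 1)%E.
Proof.
move=> hp hq; apply/andP; split.
  by apply: le_trans (tv_elem measurable0 hp hq); rewrite lee_fin.
apply: ge_ereal_sup => _ [E mE <-].
rewrite !Rint_densE // -EFinB /= lee_fin.
have /andP[a0 a1] := Rint_dens01 mE hp.
have /andP[b0 b1] := Rint_dens01 mE hq.
rewrite ler_norml; apply/andP; split; lra.
Qed.

Lemma tv_fin_num (p q : X -> R) : is_density mu p -> is_density mu q ->
  tv_dist mu p q \is a fin_num.
Proof.
move=> hp hq; have /andP[t0 t1] := tv_01 hp hq.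
by rewrite ge0_fin_numE // (le_lt_trans t1) // ltry.
Qed.

Lemma tv_elemR (p q : X -> R) E : measurable E -> is_density mu p -> is_density mu q ->
  `| \int[mu]_(x in E) p x - \int[mu]_(x in E) q x | <= fine (tv_dist mu p q).
Proof.
move=> mE hp hq; rewrite -lee_fin fineK; first exact: tv_elem.
exact: tv_fin_num.
Qed.
End TV.

Section TVB.
Context {R : realType} {d} {X : measurableType d} (mu : {measure set X -> \bar R}).

Lemma tv_bound (p q f : X -> R) (K : R) : is_density mu p -> is_density mu q ->
  measurable_fun setT f -> (forall x, `|f x| <= K) ->
  `| \int[mu]_x (p x * f x) - \int[mu]_x (q x * f x) | <=
    2 * K * fine (tv_dist mu p q).
Proof.
move=> hp hq mf fK.
have [p0 mp ip] := hp; have [q0 mq iq] := hq.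
have ipf := dens_mul_int hp mf fK; have iqf := dens_mul_int hq mf fK.
have K0 : 0 <= K.
  have [x _] : exists x : X, True.
    apply: contrapT => hn; move: ip.
    rewrite (_ : setT = set0); last by apply/seteqP; split => // x _; apply: hn; exists x.
    by rewrite integral_set0 => /(congr1 fine) /= h; move: (@oner_neq0 R); rewrite h eqxx.
  exact: le_trans (normr_ge0 _) (fK x).
set D := fun x => p x - q x.
have mD : measurable_fun setT D by exact: measurable_funB.
have iD : mu.-integrable setT (EFin \o D).
  rewrite (_ : _ \o _ = (EFin \o p) \- (EFin \o q))%E; last first.
    by apply/funext => x /=; rewrite EFinB.
  exact: integrableB (dens_int hp) (dens_int hq).
have iaD : mu.-integrable setT (EFin \o (fun x => `|D x|)).
  apply: (le_integrable measurableT _ _ iD).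
    by apply/measurable_EFinP; exact: measurableT_comp.
  by move=> x _ /=; rewrite normr_id.
have iDf : mu.-integrable setT (EFin \o (fun x => D x * f x)).
  rewrite (_ : _ \o _ = (EFin \o (fun x => p x * f x)%R) \- (EFin \o (fun x => q x * f x)%R))%E; last first.
    by apply/funext => x /=; rewrite -EFinB /D mulrBl.
  exact: integrableB ipf iqf.
rewrite -RintegralB // (@eq_Rintegral _ _ _ mu _ (fun x => D x * f x)); last first.
  by move=> x _; rewrite /D mulrBl.
apply: (le_trans (le_normr_Rintegral _ _)) => //.
apply: (@le_trans _ _ (\int[mu]_x (K * `|D x|))).
  apply: le_Rintegral => //.
  - apply: (le_integrable measurableT _ _ iDf).
      by apply/measurable_EFinP; apply: measurableT_comp => //; exact: measurable_funM.
    by move=> x _ /=; rewrite normr_id.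
  - rewrite (_ : _ \o _ = (fun x => (K%:E * (EFin \o (fun x => `|D x|)%R) x)%E)); last first.
      by apply/funext => x /=; rewrite EFinM.
    exact/integrableZl.
  - by move=> x _; rewrite normrM mulrC ler_wpM2r.
rewrite RintegralZl // [2 * K]mulrC -mulrA; apply: ler_wpM2l => //.
set E := [set x | q x <= p x].
have mE : measurable E.
  rewrite /E (_ : [set x | q x <= p x] = D @^-1` `[0, +oo[); last first.
    by apply/seteqP; split => x /=; rewrite in_itv /= andbT /D subr_ge0.
  by rewrite -[_ @^-1` _]setTI; apply: mD => //; exact: measurable_itv.
have mEc : measurable (~` E) by exact: measurableC.
rewrite -(setUv E) Rintegral_setU //; last 2 first.
  - by rewrite setUv.
  - by rewrite disj_set2E setICr.
rewrite (@eq_Rintegral _ _ _ mu E D); last first.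
  by move=> x; rewrite inE /E /= => h; rewrite ger0_norm // /D subr_ge0.
rewrite (@eq_Rintegral _ _ _ mu (~` E) (fun x => q x - p x)); last first.
  move=> x; rewrite inE /E /= => /negP; rewrite -ltNge => h.
  by rewrite ltr0_norm ?opprB // /D subr_lt0.
have h1 : \int[mu]_(x in E) D x <= fine (tv_dist mu p q).
  rewrite /D RintegralB //; try exact: dens_intS.
  exact: le_trans (ler_norm _) (tv_elemR mE hp hq).
have h2 : \int[mu]_(x in ~` E) (q x - p x) <= fine (tv_dist mu p q).
  rewrite RintegralB //; try exact: dens_intS.
  by apply: le_trans (ler_norm _) _; rewrite distrC; exact: tv_elemR.
lra.
Qed.
End TVB.

Section Tonelli.
Context {R : realType} {dS dO : measure_display} (S : measurableType dS) (O : measurableType dO).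
Variable (m2 : {measure set O -> \bar R}).
Hypothesis hm2 : sigma_finite setT m2.
Definition m2' := (m2 : set O -> \bar R).
HB.instance Definition _ := Measure.on m2'.
HB.instance Definition _ := Measure_isSigmaFinite.Build _ _ _ m2' hm2.

Lemma tonelli_meas (f : S * O -> R) : measurable_fun setT f ->
  measurable_fun setT (fun s => \int[m2]_o f (s, o)).
Proof.
move=> mf.
have mfE : measurable_fun setT (EFin \o f) by exact/measurable_EFinP.
have h1 := @measurable_fun_fubini_tonelli_F _ _ S O R m2' _ (measurable_funepos mfE)
  (fun x => funepos_ge0 _ x).
have h2 := @measurable_fun_fubini_tonelli_F _ _ S O R m2' _ (measurable_funeneg mfE)
  (fun x => funeneg_ge0 _ x).
have h3 := emeasurable_funB h1 h2.
have E : forall g : O -> \bar R, (\int[m2']_x g x = \int[m2]_x g x)%E by move=> g; reflexivity.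
apply: (measurableT_comp (@fine_measurable R setT measurableT)).
apply: eq_measurable_fun h3 => x _.
rewrite /fubini_F /= !E [RHS]integralE; congr (_ - _)%E; apply: eq_integral => y _.
  by rewrite !funeposE.
by rewrite !funenegE.
Qed.
End Tonelli.

Section Model.
Context {R : realType} {dS dO : measure_display} {S : measurableType dS} {O : measurableType dO} {A : Type}
 (muS : {measure set S -> \bar R}) (muO : {measure set O -> \bar R}) (hmuO : sigma_finite setT muO)
 (T' : S -> A -> S -> R) (Z' : S -> A -> O -> R) (rew : S -> A -> R) (gamma : R)
 {Gamma : Type} (act : Gamma -> A) (nxt : Gamma -> O -> Gamma) (alpha : Gamma -> S -> R).
Hypotheses (hT : forall s a, is_density muS (T' s a)) (hZ : forall s a, is_density muO (Z' s a))
 (hZm : forall a, measurable_fun setT (fun x : S * O => Z' x.1 a x.2))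
 (ha : is_alpha_fun muS muO T' Z' rew gamma act nxt alpha).

Definition Gf σ s' := \int[muO]_o (Z' s' (act σ) o * alpha (nxt σ o) s').

Lemma sec_meas σ s' : measurable_fun setT (fun o => alpha (nxt σ o) s').
Proof.
case: ha => hm _ _.
exact: (measurableT_comp (hm σ) (@pair1_measurable _ _ S O s')).
Qed.

Lemma Gf_meas σ : measurable_fun setT (Gf σ).
Proof.
case: ha => hm _ _.
have := @tonelli_meas R dS dO S O muO hmuO
  (fun x => Z' x.1 (act σ) x.2 * alpha (nxt σ x.2) x.1)
  (measurable_funM (hZm _) (hm σ)).
by [].
Qed.

Lemma Gf_bound σ (M : R) : (forall σ s, `|alpha σ s| <= M) -> forall s', `|Gf σ s'| <= M.
Proof.
by move=> hM s'; apply: (dens_bound (hZ s' (act σ)) (sec_meas σ s')) => o.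
Qed.

Lemma alpha_eq σ s : alpha σ s = rew s (act σ) + gamma * \int[muS]_s' (T' s (act σ) s' * Gf σ s').
Proof.
have ha' := ha; case: ha' => hm [M hM] he.
have := he σ s.
rewrite (@eq_integral _ _ _ muS setT (fun s' => (T' s (act σ) s' * Gf σ s')%:E)); last first.
  move=> s' _.
  rewrite (@eq_integral _ _ _ muO setT (fun o => ((T' s (act σ) s')%:E * (EFin \o (fun o => Z' s' (act σ) o * alpha (nxt σ o) s')%R) o)%E)); last first.
    by move=> o _ /=; rewrite -mulrA EFinM.
  have hi := dens_mul_int (hZ s' (act σ)) (sec_meas σ s') (fun o => hM (nxt σ o) s').
  rewrite integralZl // EFinM /Gf /Rintegral fineK //.
  exact: (integrable_fin_num measurableT hi).
have hi := dens_mul_int (hT s (act σ)) (Gf_meas σ) (Gf_bound σ hM).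
rewrite -[X in (_ + _ * X)%E](@fineK _ (\int[muS]_(s' in _) _)%E); last first.
  exact: (integrable_fin_num measurableT hi).
rewrite -EFinM -EFinD => /eqP; rewrite eqe => /eqP ->.
by [].
Qed.
End Model.

Section Bound.
Context {R : realType} {dS dO : measure_display} {S : measurableType dS} {O : measurableType dO} {A : Type}
 (muS : {measure set S -> \bar R}) (muO : {measure set O -> \bar R}) (hmuO : sigma_finite setT muO)
 (T' : S -> A -> S -> R) (Z' : S -> A -> O -> R) (rew : S -> A -> R) (gamma : R)
 {Gamma : Type} (act : Gamma -> A) (nxt : Gamma -> O -> Gamma) (alpha : Gamma -> S -> R).
Hypotheses (hT : forall s a, is_density muS (T' s a)) (hZ : forall s a, is_density muO (Z' s a))
 (hZm : forall a, measurable_fun setT (fun x : S * O => Z' x.1 a x.2))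
 (ha : is_alpha_fun muS muO T' Z' rew gamma act nxt alpha)
 (hgamma : 0 < gamma < 1) (hrew : exists M : R, forall s a, `|rew s a| <= M).

Lemma rew_le s a : `|rew s a| <= reward_max rew.
Proof.
case: hrew => M hM.
set Er := [set rew p.1 p.2 | p in [set: S * A]].
have ne : Er !=set0 by exists (rew s a), (s, a).
have hub : has_ubound Er by exists M => _ [p _ <-]; exact: le_trans (ler_norm _) (hM _ _).
have hlb : has_lbound Er.
  by exists (- M) => _ [p _ <-]; have := hM p.1 p.2; rewrite ler_norml => /andP[].
have h1 : rew s a <= sup Er by apply: ub_le_sup => //; exists (s, a).
have h2 : inf Er <= rew s a by apply: ge_inf => //; exists (s, a).
rewrite /reward_max -/Er le_max.
have [x0|x0] := leP 0 (rew s a).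
  by rewrite ger0_norm // h1 orbT.
apply/orP; left; rewrite ltr0_norm //.
rewrite ler_normr; apply/orP; right; rewrite lerN2. exact: h2.
Qed.
Lemma alpha_le σ s : `|alpha σ s| <= reward_max rew / (1 - gamma).
Proof.
have ha' := ha; case: ha' => hm [M hM] he.
have /andP[g0 g1] := hgamma.
set E := [set `|alpha p.1 p.2| | p in [set: Gamma * S]].
have hub : has_ubound E by exists M => _ [p _ <-]; exact: hM.
have ne : E !=set0 by exists `|alpha σ s|, (σ, s).
have hMa : forall σ' s', `|alpha σ' s'| <= sup E.
  by move=> σ' s'; apply: ub_le_sup => //; exists (σ', s').
have key : sup E <= reward_max rew + gamma * sup E.
  apply: ge_sup => // _ [[σ' s'] _ <-] /=.
  rewrite (alpha_eq hmuO hT hZ hZm ha σ' s').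
  apply: (le_trans (ler_normD _ _)); apply: lerD; first exact: rew_le.
  rewrite normrM (ger0_norm (ltW g0)); apply: ler_wpM2l; first exact: ltW.
  apply: (dens_bound (hT s' (act σ'))) => //.
    exact: (Gf_meas hmuO hZm ha σ').
  exact: (Gf_bound hZ ha σ' hMa).
apply: (le_trans (hMa σ s)).
rewrite ler_pdivlMr; last by rewrite subr_gt0.
nra.
Qed.
End Bound.

Lemma sup_tv_fin {R : realType} {d} {X : measurableType d} {Y : Type}
  (mu : {measure set X -> \bar R}) (P Q : Y -> X -> R) (y0 : Y) :
  (forall y, is_density mu (P y)) -> (forall y, is_density mu (Q y)) ->
  let psi := ereal_sup [set tv_dist mu (P y) (Q y) | y in [set: Y]] in
  psi \is a fin_num /\ forall y, fine (tv_dist mu (P y) (Q y)) <= fine psi.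
Proof.
move=> hP hQ psi.
have ub : forall y, (tv_dist mu (P y) (Q y) <= psi)%E.
  by move=> y; apply: ereal_sup_ubound; exists y.
have p0 : (0 <= psi)%E.
  by have /andP[h _] := tv_01 (hP y0) (hQ y0); exact: (le_trans h (ub y0)).
have p1 : (psi <= 1)%E.
  by apply: ge_ereal_sup => _ [y _ <-]; have /andP[_ h] := tv_01 (hP y) (hQ y).
have fin : psi \is a fin_num by rewrite ge0_fin_numE // (le_lt_trans p1) // ltry.
split => // y; apply: fine_le; [exact: tv_fin_num | exact: fin | exact: ub].
Qed.

Unset Implicit Arguments.

Theorem lemma1 (R : realType) (dS dO : measure_display)
  (S : measurableType dS) (O : measurableType dO) (A : Type)
  (muS : {measure set S -> \bar R}) (muO : {measure set O -> \bar R})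
  (hmuS : sigma_finite setT muS) (hmuO : sigma_finite setT muO)
  (T Th : S -> A -> S -> R) (Z Zh : S -> A -> O -> R)
  (rew : S -> A -> R) (gamma : R)
  (hgamma : 0 < gamma < 1)
  (hrew : exists M : R, forall s a, `|rew s a| <= M)
  (hT : forall s a, is_density muS (T s a))
  (hTh : forall s a, is_density muS (Th s a))
  (hZ : forall s' a, is_density muO (Z s' a))
  (hZh : forall s' a, is_density muO (Zh s' a))
  (hZm : forall a, measurable_fun setT (fun x : S * O => Z x.1 a x.2))
  (hZhm : forall a, measurable_fun setT (fun x : S * O => Zh x.1 a x.2))
  (Gamma : Type) (act : Gamma -> A) (nxt : Gamma -> O -> Gamma)
  (alpha alphah : Gamma -> S -> R)
  (halpha : is_alpha_fun muS muO T Z rew gamma act nxt alpha)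
  (halphah : is_alpha_fun muS muO Th Zh rew gamma act nxt alphah) :
  forall (sigma : Gamma) (s : S),
    ((`| alpha sigma s - alphah sigma s |)%:E <=
     ((2 * gamma * reward_max rew) / (1 - gamma) ^+ 2)%:E
       * snm muS muO T Th Z Zh)%E.
Proof.
move=> sigma s.
have /andP[g0 g1] := hgamma.
set Rm := reward_max rew.
set B := Rm / (1 - gamma).
have hB : forall σ s, `|alpha σ s| <= B := alpha_le hmuO hT hZ hZm halpha hgamma hrew.
have hBh : forall σ s, `|alphah σ s| <= B := alpha_le hmuO hTh hZh hZhm halphah hgamma hrew.
have Rm0 : 0 <= Rm := le_trans (normr_ge0 _) (rew_le hrew s (act sigma)).
have B0 : 0 <= B by rewrite /B divr_ge0 // subr_ge0 ltW.
have [finT hpT] := @sup_tv_fin R dS S (S * A)%type muS (fun p => T p.1 p.2) (fun p => Th p.1 p.2)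
  (s, act sigma) (fun p => hT p.1 p.2) (fun p => hTh p.1 p.2).
have [finZ hpZ] := @sup_tv_fin R dO O (S * A)%type muO (fun p => Z p.1 p.2) (fun p => Zh p.1 p.2)
  (s, act sigma) (fun p => hZ p.1 p.2) (fun p => hZh p.1 p.2).
set psiT := ereal_sup _ in finT hpT.
set psiZ := ereal_sup _ in finZ hpZ.
set pT := fine psiT. set pZ := fine psiZ.
have pT0 : 0 <= pT.
  apply: le_trans (hpT (s, act sigma)); rewrite fine_ge0 //.
  by have /andP[] := tv_01 (hT s (act sigma)) (hTh s (act sigma)).
have pZ0 : 0 <= pZ.
  apply: le_trans (hpZ (s, act sigma)); rewrite fine_ge0 //.
  by have /andP[] := tv_01 (hZ s (act sigma)) (hZh s (act sigma)).
set E := [set `|alpha p.1 p.2 - alphah p.1 p.2| | p in [set: Gamma * S]].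
have hub : has_ubound E.
  exists (B + B) => _ [p _ <-]; apply: (le_trans (ler_normB _ _)); exact: lerD.
have ne : E !=set0 by exists `|alpha sigma s - alphah sigma s|, (sigma, s).
set dl := sup E.
have hdl : forall σ' s', `|alpha σ' s' - alphah σ' s'| <= dl.
  by move=> σ' s'; apply: ub_le_sup => //; exists (σ', s').
have key : forall σ' s', `|alpha σ' s' - alphah σ' s'| <= gamma * (2 * B * pT + (2 * B * pZ + dl)).
  move=> σ' s'.
  set a := act σ'.
  set g := Gf muO Z act nxt alpha σ'.
  set gh := Gf muO Zh act nxt alphah σ'.
  have mg : measurable_fun setT g := Gf_meas hmuO hZm halpha σ'.
  have mgh : measurable_fun setT gh := Gf_meas hmuO hZhm halphah σ'.
  have bg : forall x, `|g x| <= B := Gf_bound hZ halpha σ' hB.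
  have bgh : forall x, `|gh x| <= B := Gf_bound hZh halphah σ' hBh.
  rewrite (alpha_eq hmuO hT hZ hZm halpha σ' s') (alpha_eq hmuO hTh hZh hZhm halphah σ' s').
  have e3 : forall u v w : R, u + v - (u + w) = v - w by move=> u v w; ring.
  rewrite -/a -/g -/gh e3 -mulrBr normrM (ger0_norm (ltW g0)).
  apply: ler_wpM2l; first exact: ltW.
  rewrite -(subrK (\int[muS]_s'' (Th s' a s'' * g s'')) (\int[muS]_s'' (T s' a s'' * g s''))).
  rewrite -addrA; apply: (le_trans (ler_normD _ _)); apply: lerD.
    apply: (le_trans (tv_bound (hT s' a) (hTh s' a) mg bg)).
    by apply: ler_wpM2l; [rewrite mulr_ge0 | exact: (hpT (s', a))].
  rewrite -RintegralB //; try exact: (dens_mul_int (hTh s' a)).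
  rewrite (@eq_Rintegral _ _ _ muS _ (fun x => Th s' a x * (g x - gh x))); last first.
    by move=> x _; rewrite mulrBr.
  apply: (dens_bound (hTh s' a)); first exact: measurable_funB.
  move=> x.
  set gt := \int[muO]_o (Zh x a o * alpha (nxt σ' o) x).
  rewrite -(subrK gt (g x)) -addrA; apply: (le_trans (ler_normD _ _)); apply: lerD.
    apply: (le_trans (tv_bound (hZ x a) (hZh x a) (sec_meas halpha σ' x) (fun o => hB _ _))).
    by apply: ler_wpM2l; [rewrite mulr_ge0 | exact: (hpZ (x, a))].
  rewrite /gt /gh /Gf -RintegralB //; first last.
  - exact: (dens_mul_int (hZh x a) (sec_meas halphah σ' x) (fun o => hBh _ _)).
  - exact: (dens_mul_int (hZh x a) (sec_meas halpha σ' x) (fun o => hB _ _)).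
  rewrite (@eq_Rintegral _ _ _ muO _ (fun o => Zh x a o * (alpha (nxt σ' o) x - alphah (nxt σ' o) x))); last first.
    by move=> o _; rewrite mulrBr.
  apply: (dens_bound (hZh x a)); last by move=> o; exact: hdl.
  exact: measurable_funB (sec_meas halpha σ' x) (sec_meas halphah σ' x).
have hd : dl <= gamma * (2 * B * pT + (2 * B * pZ + dl)).
  by apply: ge_sup => // _ [[σ' s'] _ <-]; exact: key.
have hd2 : dl * (1 - gamma) <= gamma * (2 * B * (pT + pZ)) by nra.
rewrite /snm -/psiT -/psiZ -(fineK finT) -(fineK finZ) -/pT -/pZ -EFinD -EFinM lee_fin.
apply: (le_trans (hdl sigma s)).
have -> : 2 * gamma * Rm / (1 - gamma) ^+ 2 * (pT + pZ) = (gamma * (2 * B * (pT + pZ))) / (1 - gamma).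
  rewrite /B; field; rewrite subr_eq0; apply/eqP => h; by move: g1; rewrite -h ltxx.
by rewrite ler_pdivlMr // subr_gt0.
Qed.
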